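(* Let $\mathbb F$ be a field and define $P_n:=z^2\bigl(y\,\mathrm{HC}_n+y^2\,\mathrm{HC}_n^2\bigr)$, where $y,z$ are variables distinct from the variables of $\mathrm{HC}_n$. Then the $\mathsf p$-family $(P)=(P_n)_{n\in\mathbb N}$ does not lie in $\mathrm{VNPC}(\le_{\mathsf p})$.
   Context: A $\mathsf p$-family $(f)=(f_n)_{n\in\mathbb N}$ is a sequence of multivariate polynomials over $\mathbb F$ whose number of variables and degree are polynomially bounded in $n$. $f\le g$ (projection) means $f=g(\alpha_1,\dots,\alpha_M)$ where each $\alpha_i$ is a variable of $f$ or an element of $\mathbb F$; $(f)\le_{\mathsf p}(g)$ if there is a polynomially bounded $t$ with $f_n\le g_{t(n)}$ for all $n$. $\mathrm{HC}_n=\sum_{\pi}\prod_{i=1}^n x_{i,\pi(i)}$, summing over permutations $\pi$ of $\{1,\dots,n\}$ that are $n$-cycles. $\mathrm{VNP}$ is the set of $\mathsf p$-families $(f)$ with $(f)\le_{\mathsf p}(\mathrm{HC})$, and $\mathrm{VNPC}(\le_{\mathsf p})=\{(f)\in\mathrm{VNP}:(\mathrm{HC})\le_{\mathsf p}(f)\}$. *)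

(* Defs.v *)
From HB Require Import structures.
From mathcomp Require Import all_boot all_order all_algebra all_fingroup.
From mathcomp Require Import mpoly.
Set Implicit Arguments. Unset Strict Implicit. Unset Printing Implicit Defensive.
Import GRing.Theory.
Local Open Scope ring_scope.

Record polyseq_fam (F : fieldType) := PolyFam {
  nvars : nat -> nat;
  fpol : forall n : nat, {mpoly F[nvars n]} }.

Definition poly_bounded (t : nat -> nat) : Prop :=
  exists c : nat, forall n : nat, (t n <= n ^ c + c)%N.

(* p-family: number of variables and degree polynomially bounded.
   (msize p = 1 + total degree, or 0 for p = 0.) *)
Definition pfamily (F : fieldType) (f : polyseq_fam F) : Prop :=
  poly_bounded (nvars f) /\ poly_bounded (fun n => msize (fpol f n)).

Definition proj_subst (F : fieldType) (k m : nat) (a : 'I_m -> 'I_k + F)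
  : m.-tuple {mpoly F[k]} :=
  [tuple match a i with inl j => 'X_j | inr c => c%:MP end | i < m].

Definition is_projection (F : fieldType) (k m : nat)
  (f : {mpoly F[k]}) (g : {mpoly F[m]}) : Prop :=
  exists a : 'I_m -> 'I_k + F, f = g \mPo proj_subst a.

Definition p_reduces (F : fieldType) (f g : polyseq_fam F) : Prop :=
  exists t : nat -> nat, poly_bounded t /\
    forall n : nat, is_projection (fpol f n) (fpol g (t n)).

Definition ncycle (n : nat) (s : 'S_n) : bool :=
  [forall x : 'I_n, porbit s x == [set: 'I_n]].

(* HC_n in the n*n variables x_{i,j} = 'X_(mxvec_index i j) *)
Definition HC_poly (F : fieldType) (n : nat) : {mpoly F[n * n]} :=
  \sum_(s : 'S_n | ncycle s) \prod_(i < n) 'X_(mxvec_index i (s i)).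

Definition HC (F : fieldType) : polyseq_fam F :=
  @PolyFam F (fun n => n * n)%N (@HC_poly F).

Definition VNP (F : fieldType) (f : polyseq_fam F) : Prop :=
  pfamily f /\ p_reduces f (HC F).

Definition VNPC (F : fieldType) (f : polyseq_fam F) : Prop :=
  VNP f /\ p_reduces (HC F) f.

(* P_n = z^2 (y HC_n + y^2 HC_n^2), in n*n + 2 variables: the first n*n are
   those of HC_n, then y, then z. *)
Definition P_poly (F : fieldType) (n : nat) : {mpoly F[n * n + 2]} :=
  let hc := HC_poly F n \mPo [tuple ('X_(lshift 2 i) : {mpoly F[n * n + 2]}) | i < n * n] in
  let y : {mpoly F[n * n + 2]} := 'X_(rshift (n * n) (0 : 'I_2)) in
  let z : {mpoly F[n * n + 2]} := 'X_(rshift (n * n) (1 : 'I_2)) in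
  z ^+ 2 * (y * hc + y ^+ 2 * hc ^+ 2).

Definition Pfam (F : fieldType) : polyseq_fam F :=
  @PolyFam F (fun n => n * n + 2)%N (@P_poly F).

(* Main.v *)
Require Import Defs.
From HB Require Import structures.
From mathcomp Require Import all_boot all_order all_algebra all_fingroup.
From mathcomp Require Import mpoly.
From mathcomp Require Import zify.
Import GRing.Theory.
Local Open Scope ring_scope.

Section S.
Variable F : fieldType.
Definition phi (p : {mpoly F[1]}) : {poly F} := mmap (@polyC F) (fun _ => 'X) p.

Lemma phiX j : phi 'X_j = 'X.
Proof. by rewrite /phi mmapX mmap1U. Qed.

Lemma phiC c : phi c%:MP = c%:P.
Proof. by rewrite /phi mmapC. Qed.

Lemma ncycle1 (s : 'S_1) : ncycle s.
Proof.
apply/forallP => x; apply/eqP/setP => y; rewrite inE.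
by rewrite (ord1 y) -(ord1 x) porbit_id.
Qed.

Lemma phiHC : phi (HC_poly F 1) = 'X.
Proof.
rewrite /HC_poly /phi raddf_sum /=.
rewrite (eq_bigr (fun _ => 'X)) => [|s _]; last first.
  by rewrite rmorph_prod big_ord1 /= -/(phi _) phiX.
rewrite (eq_bigl xpredT) => [|s]; last by rewrite ncycle1.
by rewrite sumr_const card_Sn.
Qed.
Lemma key (Z u : {poly F}) :
  (Z = 'X \/ exists c, Z = c%:P) -> 'X <> Z ^+ 2 * (u + u ^+ 2).
Proof.
move=> [->|[c ->]] E.
  move: E => /(congr1 (fun p : {poly F} => p`_1)).
  by rewrite coefXnM /= coefX /= => /eqP; rewrite oner_eq0.
have [le1|gt1] := leqP (size u) 1.
  rewrite [u]size1_polyC // -!polyC_exp -polyCD -polyCM in E.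
  move: E => /(congr1 (fun p : {poly F} => p`_1)).
  by rewrite /= coefC coefX /= => /eqP; rewrite oner_eq0.
have u0 : u != 0 by rewrite -size_poly_gt0 (ltn_trans _ gt1).
have s2 : size (u ^+ 2) = ((size u).-1 * 2).+1.
  by rewrite -(size_exp u 2) prednK // size_poly_gt0 expf_neq0.
have sw : size (u + u ^+ 2) = ((size u).-1 * 2).+1.
  rewrite addrC size_polyDl s2 //. case: (size u) gt1 => [|[|k]] //= _; lia.
have c0 : c ^+ 2 != 0.
  apply/negP => /eqP c0; move: E; rewrite -polyC_exp c0 mul0r => /eqP; by rewrite polyX_eq0.
move: E => /(congr1 (fun p : {poly F} => size p)); rewrite -polyC_exp size_Cmul // sw size_polyX.
case: (size u) gt1 => [|[|k]] //= _; lia.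
Qed.

Lemma phi_sub (k : nat) (a : 'I_k -> 'I_1 + F) (i : 'I_k) :
  phi ('X_i \mPo proj_subst a) = 'X \/ exists c, phi ('X_i \mPo proj_subst a) = c%:P.
Proof.
rewrite comp_mpolyXU -tnth_nth tnth_mktuple.
case: (a i) => [j|c]; first by left; rewrite phiX.
by right; exists c; rewrite phiC.
Qed.

Lemma key2 (Z u : {mpoly F[1]}) :
  (phi Z = 'X \/ exists c, phi Z = c%:P) -> 'X <> phi (Z ^+ 2 * (u + u ^+ 2)).
Proof.
move=> h; rewrite /phi (rmorphM _ (Z ^+ 2)) (rmorphD _ u) !(rmorphXn (mmap _ _)) -!/(phi _).
exact: key.
Qed.

End S.

Lemma morph_shape (R S : comNzRingType) (f : {rmorphism R -> S}) (z y h : R) :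
  f (z ^+ 2 * (y * h + y ^+ 2 * h ^+ 2)) = f z ^+ 2 * (f y * f h + (f y * f h) ^+ 2).
Proof. by rewrite (rmorphM f (z ^+ 2)) rmorphD (rmorphM f y h) (rmorphM f (y ^+ 2)) !(rmorphXn f) exprMn. Qed.

Theorem lemma3 (F : fieldType) : ~ VNPC (Pfam F).
Proof.
move=> [_ [t [_ Ht]]].
have [a E] := Ht 1%N.
move: E; rewrite /= /P_poly.
set hc := HC_poly F _ \mPo _.
move=> /(congr1 (@phi F)).
rewrite phiHC morph_shape.
apply: key2; exact: phi_sub.
Qed.
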